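(* The subspace $\mathfrak t_0=\mathrm{span}\{H_1,H_2,Z,\tilde r_1,\tilde r_2\}$ is an abelian Lie subalgebra of $\mathfrak O_\kappa$, i.e. the elements $H_1,H_2,Z,\tilde r_1,\tilde r_2$ of $\mathfrak O_\kappa$ pairwise commute.
   Context: Let $V_{\mathbb R}=\mathbb R^4$ with standard inner product $(\cdot,\cdot)$ and orthonormal basis $x_1,\dots,x_4$; $V=\mathbb C^4$ with bilinear extension; $B(x)(y)=(x,y)$. Fix positive integers $m_1,m_2$. $R\subset V_\mathbb R$ consists of $\alpha_p=(\sin(p\pi/m_1),-\cos(p\pi/m_1),0,0)$ ($p=1,\dots,2m_1$) and $\beta_q=(0,0,\sin(q\pi/m_2),-\cos(q\pi/m_2))$ ($q=1,\dots,2m_2$); $R_+=\{\alpha_1,\dots,\alpha_{m_1},\beta_1,\dots,\beta_{m_2}\}$; reflections $s_\alpha(x)=x-2\frac{(x,\alpha)}{(\alpha,\alpha)}\alpha$ generate $W\cong D_{2m_1}\times D_{2m_2}$. $\kappa:R\to\mathbb C$ is $W$-invariant. $H_\kappa$: quotient of $T(V\oplus V^* )\rtimes\mathbb CW$ by $[x,y]=0=[\xi,\eta]$, $[\xi,x]=\xi(x)+\sum_{\alpha\in R_+}\frac{2\kappa_\alpha}{(\alpha,\alpha)}(B^{-1}(\xi),\alpha)(x,\alpha)s_\alpha$. $\mathcal C$: Clifford algebra on $e_1,\dots,e_4$ ($e_je_k+e_ke_j=2\delta_{jk}$, $e_j$ odd); $\gamma:\bigwedge V\to\mathcal C$ antisymmetrisation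 ($\gamma(x_j)=e_j$, $\gamma(v_1\wedge\cdots\wedge v_p)=\frac1{p!}\sum_{g\in S_p}\mathrm{sgn}(g)\gamma(v_{g(1)})\cdots\gamma(v_{g(p)})$). On $H_\kappa\otimes\mathcal C$ (graded via $\mathcal C$): $[\![a,b]\!]=ab-(-1)^{|a||b|}ba$. With $\xi_j=B(x_j)$, $\underline D=\sum\xi_j\otimes e_j$, $\underline x=\sum x_j\otimes e_j$, $\Delta_\kappa=\sum\xi_j^2$, $|x|^2=\sum x_j^2$, $E=\frac12\sum(x_j\xi_j+\xi_jx_j)$ span $\mathfrak g$; $\mathfrak O_\kappa$ is the graded centraliser of $\mathfrak g$ in $H_\kappa\otimes\mathcal C$. $\tilde W\subset\mathcal C^\times$ generated by the $\gamma(\alpha)$, $\alpha\in R$, is embedded in $\mathfrak O_\kappa$ by $\tilde w\mapsto\pi(\tilde w)\otimes\tilde w$ ($\pi(\gamma(\alpha))=s_\alpha$); $\tilde s_p,\tilde t_q$ images of $\gamma(\alpha_p),\gamma(\beta_q)$; $\tilde r_1=-\tilde s_{m_1}\tilde s_1$, $\tilde r_2=-\tilde t_{m_2}\tilde t_1$. $O(v)=-\frac12P(\gamma(v))$ with $P=\mathrm{id}-\frac12\mathrm{ad}(\underline D)\mathrm{ad}(\underline x)$, $\mathrm{ad}(a)b=[\![a,b]\!]$; $z_a^\pm=x_{2a-1}\pm ix_{2a}$. $H_a=\frac12O(z_a^+\wedge z_a^-)$ ($a=1,2$), $Z=O(x_1\wedge x_2\wedge x_3\wedge x_4)$. *)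

(* Defs.v *)
From HB Require Import structures.
From mathcomp Require Import all_boot all_order all_algebra all_fingroup.
From mathcomp Require Import complex.
From mathcomp Require Import reals trigo.
Set Implicit Arguments. Unset Strict Implicit. Unset Printing Implicit Defensive.
Import Order.TTheory GRing.Theory Num.Theory.
Local Open Scope ring_scope.

Definition toC (R : realType) (r : R) : R[i] := Complex r 0.
Definition iC (R : realType) : R[i] := Complex 0 1.

Definition ip (R : realType) (u v : 'cV[R]_4) : R := \sum_(j < 4) u j 0 * v j 0.

(* reflection s_a(x) = x - 2 (x,a)/(a,a) a, as a matrix *)
Definition refl (R : realType) (a : 'cV[R]_4) : 'M[R]_4 :=
  1%:M - (2 / ip a a) *: (a *m a^T).

(* the root system R of type I_2(m1) x I_2(m2) *)
Definition alpha (R : realType) (m1 p : nat) : 'cV[R]_4 :=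
  \col_(j < 4) [:: sin (p%:R * pi / m1%:R); - cos (p%:R * pi / m1%:R); 0; 0]`_j.
Definition beta (R : realType) (m2 q : nat) : 'cV[R]_4 :=
  \col_(j < 4) [:: 0; 0; sin (q%:R * pi / m2%:R); - cos (q%:R * pi / m2%:R)]`_j.

Definition rootsys (R : realType) (m1 m2 : nat) : seq 'cV[R]_4 :=
  [seq alpha R m1 p | p <- iota 1 (2 * m1)] ++ [seq beta R m2 q | q <- iota 1 (2 * m2)].

Definition posroots (R : realType) (m1 m2 : nat) : seq 'cV[R]_4 :=
  [seq alpha R m1 p | p <- iota 1 m1] ++ [seq beta R m2 q | q <- iota 1 m2].

Definition inW (R : realType) (m1 m2 : nat) (g : 'M[R]_4) : Prop :=
  exists s : seq 'cV[R]_4, all (fun a => a \in rootsys R m1 m2) s /\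
    g = foldr (fun a h => refl a *m h) 1%:M s.

Definition cvC (R : realType) (v : 'cV[R]_4) : 'cV[R[i]]_4 := map_mx (@toC R) v.

Definition lin (R : realType) (B : algType R[i]) (g : 'I_4 -> B) (v : 'cV[R[i]]_4) : B :=
  \sum_(j < 4) v j 0 *: g j.

(* functional on V, as a row vector f (f(y) = f *m y); xi(f) = sum_j f_j xi_j *)
Definition linr (R : realType) (B : algType R[i]) (g : 'I_4 -> B) (f : 'rV[R[i]]_4) : B :=
  \sum_(j < 4) f 0 j *: g j.

Definition ev (R : realType) (j : 'I_4) : 'cV[R]_4 := \col_(k < 4) (k == j)%:R.

(* The graded bracket on H_kappa (x) C: the parity of an element is     *)
(* supplied explicitly (true = odd).                                    *)
Definition sbr (K : nzRingType) (pa pb : bool) (a b : K) : K :=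
  a * b - (-1) ^+ (pa && pb) * (b * a).

(* gamma : /\^k V -> Clifford algebra, on decomposable k-vectors,       *)
Definition gam1 (R : realType) (B : algType R[i]) (e : 'I_4 -> B) (v : 'cV[R[i]]_4) : B :=
  lin e v.

Definition gamw (R : realType) (B : algType R[i]) (e : 'I_4 -> B) (k : nat)
  (v : 'I_k -> 'cV[R[i]]_4) : B :=
  (k`!%:R : R[i])^-1 *:
    \sum_(g : 'S_k) ((-1) ^+ odd_perm g : R[i]) *: \prod_(i < k) gam1 e (v (g i)).

(* Dirac and xs are odd.                                                *)
Definition Pop (R : realType) (B : algType R[i]) (Dirac xs : B) (pa : bool) (a : B) : B :=
  a - (1 / 2 : R[i]) *: sbr true (~~ pa) Dirac (sbr true pa xs a).

(* gamma(v) is k mod 2.                                                 *)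
Definition Oop (R : realType) (B : algType R[i]) (e : 'I_4 -> B) (Dirac xs : B) (k : nat)
  (v : 'I_k -> 'cV[R[i]]_4) : B :=
  (- (1 / 2) : R[i]) *: Pop Dirac xs (odd k) (gamw e v).

(* z_a^{+-} = x_{2a-1} +- i x_{2a}, a = 1,2 (0-based indices 2a-2, 2a-1) *)
Definition zvec (R : realType) (a : nat) (sg : bool) : 'cV[R[i]]_4 :=
  \col_(k < 4) (if k == (2 * a - 2)%N :> nat then 1
               else if k == (2 * a - 1)%N :> nat then (if sg then iC R else - iC R)
               else 0).

Definition zpair (R : realType) (a : nat) : 'I_2 -> 'cV[R[i]]_4 :=
  fun i => if i == 0 :> nat then zvec R a true else zvec R a false.
Definition x1234 (R : realType) : 'I_4 -> 'cV[R[i]]_4 := fun i => cvC (ev R i).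

(* Main.v *)
Require Import Defs.
From HB Require Import structures.
From mathcomp Require Import all_boot all_order all_algebra all_fingroup.
From mathcomp Require Import complex.
From mathcomp Require Import reals trigo.
From mathcomp Require Import zify ring lra.
Import Order.TTheory GRing.Theory Num.Theory.
Local Open Scope ring_scope.
Set Implicit Arguments. Unset Strict Implicit. Unset Printing Implicit Defensive.

Lemma toCE (R : realType) : @toC R = real_complex R.
Proof. by []. Qed.

Section Alg.
Variable (C : fieldType) (B : algType C).

Definition com (y z : B) := y * z = z * y.
Definition acom (y z : B) := y * z = - (z * y).

Lemma com_refl y : com y y. Proof. by []. Qed.
Lemma com_sym y z : com y z -> com z y. Proof. by []. Qed.
Lemma comD y z w : com y w -> com z w -> com (y + z) w.
Proof. by rewrite /com mulrDl mulrDr => -> ->. Qed.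
Lemma comN y w : com y w -> com (- y) w.
Proof. by rewrite /com mulNr mulrN => ->. Qed.
Lemma comB y z w : com y w -> com z w -> com (y - z) w.
Proof. by move=> ? ?; apply: comD => //; apply: comN. Qed.
Lemma comZ c y w : com y w -> com (c *: y) w.
Proof. by rewrite /com -scalerAl -scalerAr => ->. Qed.
Lemma comM y z w : com y w -> com z w -> com (y * z) w.
Proof. rewrite /com /acom => Hy Hz; by rewrite -mulrA Hz ?mulrN ?mulNr !mulrA Hy ?mulrN ?mulNr ?opprK ?mulrA. Qed.
Lemma com1 w : com 1 w. Proof. by rewrite /com mul1r mulr1. Qed.
Lemma com0 w : com 0 w. Proof. by rewrite /com mul0r mulr0. Qed.
Lemma com_sum (I : Type) (r : seq I) (P : pred I) (F : I -> B) w :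
  (forall i, P i -> com (F i) w) -> com (\sum_(i <- r | P i) F i) w.
Proof.
move=> H; elim/big_rec: _ => [|i y Pi Hy]; first exact: com0.
by apply: comD => //; apply: H.
Qed.
Lemma com_prod (I : Type) (r : seq I) (P : pred I) (F : I -> B) w :
  (forall i, P i -> com (F i) w) -> com (\prod_(i <- r | P i) F i) w.
Proof.
move=> H; elim/big_rec: _ => [|i y Pi Hy]; first exact: com1.
by apply: comM => //; apply: H.
Qed.

Lemma acomD y z w : acom y w -> acom z w -> acom (y + z) w.
Proof. by rewrite /acom mulrDl mulrDr opprD => -> ->. Qed.
Lemma acomN y w : acom y w -> acom (- y) w.
Proof. by rewrite /acom mulNr mulrN => ->. Qed.
Lemma acomZ c y w : acom y w -> acom (c *: y) w.
Proof. by rewrite /acom -scalerAl -scalerAr => ->; rewrite scalerN. Qed.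
Lemma acom0 w : acom 0 w. Proof. by rewrite /acom mul0r mulr0 oppr0. Qed.
Lemma acom_sum (I : Type) (r : seq I) (P : pred I) (F : I -> B) w :
  (forall i, P i -> acom (F i) w) -> acom (\sum_(i <- r | P i) F i) w.
Proof.
move=> H; elim/big_rec: _ => [|i y Pi Hy]; first exact: acom0.
by apply: acomD => //; apply: H.
Qed.
Lemma acom_sym y z : acom y z -> acom z y.
Proof. by rewrite /acom => ->; rewrite opprK. Qed.
Lemma acomMcom y z w : acom y w -> acom z w -> com (y * z) w.
Proof. rewrite /com /acom => Hy Hz; by rewrite -mulrA Hz ?mulrN ?mulNr !mulrA Hy ?mulrN ?mulNr ?opprK ?mulrA. Qed.
Lemma comMacom y z w : com y w -> acom z w -> acom (y * z) w.
Proof. rewrite /com /acom => Hy Hz; by rewrite -mulrA Hz ?mulrN ?mulNr !mulrA Hy ?mulrN ?mulNr ?opprK ?mulrA. Qed.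
Lemma acomMacom y z w : acom y w -> com z w -> acom (y * z) w.
Proof. rewrite /com /acom => Hy Hz; by rewrite -mulrA Hz ?mulrN ?mulNr !mulrA Hy ?mulrN ?mulNr ?opprK ?mulrA. Qed.

Definition scom (b : bool) (y z : B) := y * z = ((-1) ^+ b : C) *: (z * y).
Lemma scom_prod n (F : 'I_n -> B) (s : 'I_n -> bool) w :
  (forall i, scom (s i) (F i) w) ->
  scom (odd (\sum_(i < n) s i)) (\prod_(i < n) F i) w.
Proof.
elim: n F s => [|n IH] F s H.
  by rewrite /scom !big_ord0 expr0 scale1r mul1r mulr1.
rewrite /scom !big_ord_recr /= oddD signr_addb.
rewrite -mulrA (H ord_max) -scalerAr mulrA.
rewrite mulrA (IH (fun i => F (widen_ord (leqnSn n) i)) (fun i => s (widen_ord (leqnSn n) i))) //.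
by rewrite -scalerAl scalerA oddb mulrC -mulrA.
Qed.

End Alg.

Lemma ip_alpha1 (R : realType) m p : ip (alpha R m p) (alpha R m p) = 1.
Proof.
rewrite /ip /alpha !big_ord_recl big_ord0 !mxE /=.
by rewrite mulr0 !addr0 mulrNN -!expr2 addrC cos2Dsin2.
Qed.
Lemma ip_beta1 (R : realType) m p : ip (beta R m p) (beta R m p) = 1.
Proof.
rewrite /ip /beta !big_ord_recl big_ord0 !mxE /=.
by rewrite !mul0r !add0r addr0 mulrNN -!expr2 addrC cos2Dsin2.
Qed.
Lemma ip_ev (R : realType) (a : 'cV[R]_4) j : ip (ev R j) a = a j 0.
Proof.
rewrite /ip (bigD1 j) //= !mxE eqxx mul1r big1 ?addr0 // => k /negbTE.
by rewrite !mxE => ->; rewrite mul0r.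
Qed.
Lemma posroots_sub (R : realType) m1 m2 a : a \in posroots R m1 m2 -> a \in rootsys R m1 m2.
Proof.
rewrite /posroots /rootsys !mem_cat => /orP [] /mapP [p]; rewrite mem_iota => Hp ->.
  by apply/orP; left; apply/mapP; exists p => //; rewrite mem_iota; lia.
by apply/orP; right; apply/mapP; exists p => //; rewrite mem_iota; lia.
Qed.
Lemma posroots_ip (R : realType) m1 m2 a : a \in posroots R m1 m2 -> ip a a = 1.
Proof.
rewrite /posroots mem_cat => /orP [] /mapP [p _ ->]; [exact: ip_alpha1 | exact: ip_beta1].
Qed.
Definition plane01 (R : realType) (a : 'cV[R]_4) := a (inord 2) 0 = 0 /\ a (inord 3) 0 = 0.

Lemma refl_entry (R : realType) (a : 'cV[R]_4) k j :
  refl a k j = (k == j)%:R - 2 / ip a a * (a k 0 * a j 0).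
Proof. by rewrite /refl !mxE big_ord1 mxE. Qed.

Lemma reflev (R : realType) (a : 'cV[R]_4) k j : (refl a *m ev R j) k 0 = refl a k j.
Proof.
rewrite mxE (bigD1 j) //= big1 ?addr0 => [|l /negbTE Hl]; last by rewrite [ev R j l 0]mxE Hl mulr0.
by rewrite [ev R j j 0]mxE eqxx mulr1.
Qed.

Lemma refl_invol (R : realType) (a : 'cV[R]_4) : ip a a = 1 -> refl a *m refl a = 1%:M.
Proof.
move=> H1.
have PP : (a *m a^T) *m (a *m a^T) = a *m a^T.
  have aa : a^T *m a = 1%:M.
    by apply/matrixP => i j; rewrite !ord1 !mxE -H1 /ip; apply: eq_bigr => k _; rewrite !mxE.
  by rewrite mulmxA -(mulmxA a) aa mulmx1.
rewrite /refl H1 divr1 mulmxBl !mulmxBr mul1mx mulmx1 -!scalemxAl -!scalemxAr mul1mx PP.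
by rewrite scalerA; apply/matrixP => i j; rewrite !mxE; ring.
Qed.

Section Main.
Variable R : realType.
Local Notation C := (R[i]).
Variables (m1 m2 : nat) (Hm1 : (0 < m1)%N) (Hm2 : (0 < m2)%N).
Variable kappa : 'cV[R]_4 -> C.
Variable B : algType C.
Variables (x xi e : 'I_4 -> B) (piW : 'M[R]_4 -> B).
Hypothesis Hpi1 : piW 1%:M = 1.
Hypothesis HpiM : forall g h, inW m1 m2 g -> inW m1 m2 h -> piW (g *m h) = piW g * piW h.
Hypothesis HWx : forall g j, inW m1 m2 g -> piW g * x j = lin x (cvC (g *m ev R j)) * piW g.
Hypothesis HWxi : forall g j, inW m1 m2 g ->
      piW g * xi j = linr xi ((cvC (ev R j))^T *m invmx (map_mx (@toC R) g)) * piW g.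
Hypothesis Hxx : forall j k, x j * x k = x k * x j.
Hypothesis Hxixi : forall j k, xi j * xi k = xi k * xi j.
Hypothesis Hxix : forall j k, xi j * x k - x k * xi j =
      (j == k)%:R +
      \sum_(a <- posroots R m1 m2)
         (toC (2 / ip a a) * kappa a * toC (ip (ev R j) a) * toC (ip (ev R k) a)) *: piW (refl a).
Hypothesis He : forall j k, e j * e k + e k * e j = (2 * (j == k)%:R) *: 1.
Hypothesis Hex : forall j k, e j * x k = x k * e j.
Hypothesis Hexi : forall j k, e j * xi k = xi k * e j.
Hypothesis HepiW : forall j g, inW m1 m2 g -> e j * piW g = piW g * e j.

Lemma scaleMM (a b : C) (y z : B) : (a *: y) * (b *: z) = (a * b) *: (y * z).
Proof. by rewrite -scalerAl -scalerAr scalerA. Qed.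

Lemma sum_delta (F : 'I_4 -> C) j : \sum_(k < 4) F k * (j == k)%:R = F j.
Proof.
rewrite (bigD1 j) //= eqxx mulr1 big1 ?addr0 // => k /negbTE.
by rewrite eq_sym => ->; rewrite mulr0.
Qed.

Lemma cliff_gen (f g : 'I_4 -> B) :
  (forall j k, com (f j) (e k)) -> (forall j k, com (g j) (e k)) ->
  (forall j k, f j * g k = g k * f j) ->
  (\sum_j f j * e j) * (\sum_k g k * e k) + (\sum_k g k * e k) * (\sum_j f j * e j)
  = 2 *: \sum_j f j * g j.
Proof.
move=> Hf Hg Hfg.
rewrite !mulr_suml.
under eq_bigr do rewrite mulr_sumr.
under [X in _ + X]eq_bigr do rewrite mulr_sumr.
rewrite [X in _ + X]exchange_big /= -big_split /= scaler_sumr.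
apply: eq_bigr => j _; rewrite -big_split /=.
transitivity (\sum_(k < 4) (2 * (j == k)%:R) *: (f j * g k)).
  apply: eq_bigr => k _.
  have E1 : f j * e j * (g k * e k) = f j * g k * (e j * e k).
    by rewrite -!mulrA; congr (_ * _); rewrite !mulrA (Hg k j).
  have E2 : g k * e k * (f j * e j) = f j * g k * (e k * e j).
    by rewrite !mulrA -[g k * e k * f j]mulrA -(Hf j k) mulrA -(Hfg j k).
  by rewrite E1 E2 -mulrDr He -scalerAr mulr1.
rewrite (bigD1 j) //= eqxx mulr1 big1 ?addr0 // => k /negbTE.
by rewrite eq_sym => ->; rewrite mulr0 scale0r.
Qed.


Local Notation S := (posroots R m1 m2).
Local Notation s a := (piW (refl a)).
Definition ya (y : 'I_4 -> B) (a : 'cV[R]_4) : B := \sum_k toC (a k 0) *: y k.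

Lemma root_W a : a \in S -> inW m1 m2 (refl a).
Proof.
move=> Ha; exists [:: a]; split; first by rewrite /= posroots_sub.
by rewrite /= mulmx1.
Qed.

Lemma s2 a : a \in S -> s a * s a = 1.
Proof. by move=> Ha; have W := root_W Ha; rewrite -HpiM // (refl_invol (posroots_ip Ha)). Qed.

Lemma sum_refl (y : 'I_4 -> B) a j : a \in S ->
  \sum_k toC (refl a k j) *: y k = y j - (2 * toC (a j 0)) *: ya y a.
Proof.
move=> Ha.
under eq_bigr => k _ do rewrite refl_entry (posroots_ip Ha) divr1 toCE rmorphB /= rmorph_nat scalerBl.
rewrite sumrB; congr (_ - _).
  rewrite (bigD1 j) //= eqxx scale1r big1 ?addr0 // => k /negbTE ->.
  by rewrite scale0r.
rewrite /ya scaler_sumr; apply: eq_bigr => k _; rewrite scalerA; congr (_ *: _).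
by rewrite !rmorphM /= toCE (rmorph_nat (real_complex R) 2); ring.
Qed.

Lemma refl_x a j : a \in S -> s a * x j = (x j - (2 * toC (a j 0)) *: ya x a) * s a.
Proof.
move=> Ha; rewrite HWx; last exact: root_W.
congr (_ * _).
rewrite /lin -(sum_refl x j Ha); apply: eq_bigr => k _.
by rewrite /cvC mxE reflev.
Qed.

Lemma inv_reflC a : a \in S ->
  invmx (map_mx (@toC R) (refl a)) = map_mx (@toC R) (refl a).
Proof.
move=> Ha.
have HN : map_mx (@toC R) (refl a) *m map_mx (@toC R) (refl a) = 1%:M.
  by rewrite toCE -map_mxM (refl_invol (posroots_ip Ha)) map_mx1.
have [U _] := mulmx1_unit HN.
by rewrite -[invmx _]mulmx1 -HN mulmxA mulVmx // mul1mx.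
Qed.

Lemma refl_xi a j : a \in S -> s a * xi j = (xi j - (2 * toC (a j 0)) *: ya xi a) * s a.
Proof.
move=> Ha; rewrite HWxi; last exact: root_W.
congr (_ * _).
rewrite inv_reflC // /linr -(sum_refl xi j Ha); apply: eq_bigr => k _.
congr (_ *: _).
rewrite mxE (bigD1 j) //= big1 ?addr0 => [|l /negbTE Hl].
  by rewrite !mxE eqxx !big_ord1 !mxE eq_sym [a k 0 * a j 0]mulrC toCE rmorph1 mul1r.
by rewrite !mxE Hl toCE rmorph0 mul0r.
Qed.

Lemma half2 (y : B) : (1 / 2 : C) *: (y + y) = y.
Proof.
have h : (1 / 2 * (1 + 1) : C) = 1.
  by rewrite mul1r -[1 + 1]/(2%:R : C) mulVf // pnatr_eq0.
by rewrite -{1 2}[y]scale1r -scalerDl scalerA h scale1r.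
Qed.

Lemma sym_cliff (N : 'I_4 -> 'I_4 -> B) :
  (forall j k, N j k = N k j) -> (forall j k l, com (N j k) (e l)) ->
  \sum_j \sum_k N j k * (e j * e k) = \sum_j N j j.
Proof.
move=> Hs Hc.
rewrite -[LHS]half2 -[RHS]half2; congr (_ *: _).
rewrite [X in _ + X]exchange_big -big_split /= -big_split /=.
apply: eq_bigr => j _; rewrite -big_split /=.
transitivity (\sum_(k < 4) (2 * (j == k)%:R) *: N j k).
  by apply: eq_bigr => k _; rewrite (Hs k j) -mulrDr He -scalerAr mulr1.
rewrite (bigD1 j) //= eqxx mulr1 big1 ?addr0 ?scalerDl ?scale1r //.
by move=> k /negbTE; rewrite eq_sym => ->; rewrite mulr0 scale0r.
Qed.

Lemma expand_prod (f g : 'I_4 -> B) : (forall j k, com (g k) (e j)) ->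
  (\sum_j f j * e j) * (\sum_k g k * e k) = \sum_j \sum_k (f j * g k) * (e j * e k).
Proof.
move=> Hg; rewrite mulr_suml; apply: eq_bigr => j _; rewrite mulr_sumr.
apply: eq_bigr => k _.
by rewrite -!mulrA; congr (_ * _); rewrite !mulrA -(Hg j k).
Qed.

Lemma cliff2 (f g : 'I_4 -> B) :
  (forall j l, com (f j) (e l)) -> (forall j l, com (g j) (e l)) ->
  (forall j k, f j * g k - g k * f j = f k * g j - g j * f k) ->
  (\sum_j f j * e j) * (\sum_k g k * e k) + (\sum_k g k * e k) * (\sum_j f j * e j)
  = \sum_j (f j * g j + g j * f j).
Proof.
move=> Hf Hg Hfg.
rewrite !expand_prod // -big_split /=.
under eq_bigr do rewrite -big_split /=.
under eq_bigr do under eq_bigr do rewrite -mulrDl.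
apply: sym_cliff.
  move=> j k; have H := Hfg j k.
  rewrite -[f j * g k](subrK (g k * f j)) H -addrA [g k * f j + _]addrC addrA subrK.
  by [].
move=> j k l; apply: comD; apply: comM => //.
Qed.

Definition gam (u : 'cV[C]_4) : B := gam1 e u.
Definition bil (u v : 'cV[C]_4) : C := \sum_j u j 0 * v j 0.

Lemma gamE u : gam u = \sum_j (u j 0 *: 1) * e j.
Proof. by rewrite /gam /gam1 /lin; apply: eq_bigr => j _; rewrite -scalerAl mul1r. Qed.

Lemma gam_anti u v : gam u * gam v + gam v * gam u = (2 * bil u v) *: 1.
Proof.
rewrite !gamE cliff2.
- rewrite /bil -scalerA scaler_suml scaler_sumr; apply: eq_bigr => j _.
  by rewrite !scaleMM mulr1 [v j 0 * u j 0]mulrC -scalerDl scalerA mulr_natl mulr2n.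
- by move=> j l; apply: comZ; apply: com1.
- by move=> j l; apply: comZ; apply: com1.
- by move=> j k; rewrite !scaleMM !mulr1 [u j 0 * _]mulrC [u k 0 * _]mulrC !subrr.
Qed.

Lemma gam_com_of (w : B) u : (forall j, com (e j) w) -> com (gam u) w.
Proof. by move=> H; rewrite /gam /gam1 /lin; apply: com_sum => j _; apply: comZ. Qed.
Lemma gam_acom_of (w : B) u : (forall j, acom (e j) w) -> acom (gam u) w.
Proof. by move=> H; rewrite /gam /gam1 /lin; apply: acom_sum => j _; apply: acomZ. Qed.

Lemma gam_acom u v : bil u v = 0 -> acom (gam u) (gam v).
Proof.
move=> H; have := gam_anti u v; rewrite H mulr0 scale0r => /eqP.
by rewrite addr_eq0 => /eqP.
Qed.

Definition Xs : B := \sum_(j < 4) x j * e j.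
Definition Dr : B := \sum_(j < 4) xi j * e j.

Lemma Xs2 : Xs * Xs = \sum_j x j * x j.
Proof.
have hx : forall j l, com (x j) (e l) by move=> j l; rewrite /com -Hex.
have H := @cliff2 x x hx hx (fun j k => etrans (congr1 (fun t => t - _) (Hxx j k)) (etrans (subrr _) (esym (etrans (congr1 (fun t => t - _) (Hxx k j)) (subrr _))))).
by rewrite -[LHS]half2 /Xs H -[RHS]half2 -big_split.
Qed.

Lemma Dr2 : Dr * Dr = \sum_j xi j * xi j.
Proof.
have hx : forall j l, com (xi j) (e l) by move=> j l; rewrite /com -Hexi.
have H := @cliff2 xi xi hx hx (fun j k => etrans (congr1 (fun t => t - _) (Hxixi j k)) (etrans (subrr _) (esym (etrans (congr1 (fun t => t - _) (Hxixi k j)) (subrr _))))).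
by rewrite -[LHS]half2 /Dr H -[RHS]half2 -big_split.
Qed.

Definition cf (a : 'cV[R]_4) : C := toC (2 / ip a a) * kappa a.
Definition Mf j k : B :=
  (j == k)%:R + \sum_(a <- S) (cf a * toC (a j 0) * toC (a k 0)) *: s a.

Lemma HM j k : xi j * x k - x k * xi j = Mf j k.
Proof. by rewrite Hxix /Mf; congr (_ + _); apply: eq_bigr => a _; rewrite !ip_ev. Qed.

Lemma Mf_sym j k : Mf j k = Mf k j.
Proof.
rewrite /Mf eq_sym; congr (_ + _); apply: eq_bigr => a _.
by rewrite -!mulrA [toC (a j 0) * _]mulrC.
Qed.

Lemma sumsq a : a \in S -> \sum_k toC (a k 0) * toC (a k 0) = 1.
Proof.
move=> Ha; rewrite toCE -(rmorph1 (real_complex R)) -(posroots_ip Ha) /ip rmorph_sum.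
by apply: eq_bigr => k _; rewrite rmorphM.
Qed.

Lemma s_anti (y : 'I_4 -> B) a : a \in S ->
  (forall j, s a * y j = (y j - (2 * toC (a j 0)) *: ya y a) * s a) ->
  s a * ya y a = - (ya y a * s a).
Proof.
move=> Ha Hy.
rewrite {1}/ya mulr_sumr.
under eq_bigr do rewrite -scalerAr Hy scalerAl scalerBr scalerA.
rewrite -mulr_suml sumrB -scaler_suml.
have -> : \sum_(i < 4) toC (a i 0) * (2 * toC (a i 0)) = 2.
  by rewrite -[RHS]mulr1 -(sumsq Ha) mulr_sumr; apply: eq_bigr => i _; ring.
rewrite -/(ya y a) -mulNr; congr (_ * _).
have -> : (2 : C) = 1 + 1 by [].
by rewrite scalerDl scale1r opprD addrA subrr add0r.
Qed.

Lemma sumM_l (y : 'I_4 -> B) l :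
  \sum_k y k * Mf k l = y l + \sum_(a <- S) (cf a * toC (a l 0)) *: (ya y a * s a).
Proof.
rewrite /Mf; under eq_bigr do rewrite mulrDr; rewrite big_split /=; congr (_ + _).
  rewrite (bigD1 l) //= eqxx mulr1 big1 ?addr0 // => k /negbTE ->; by rewrite mulr0.
under eq_bigr do rewrite mulr_sumr; rewrite exchange_big /=.
apply: eq_bigr => a _; rewrite /ya mulr_suml scaler_sumr; apply: eq_bigr => k _.
by rewrite -scalerAr -[toC (a k 0) *: y k * s a]scalerAl scalerA; congr (_ *: _); ring.
Qed.

Lemma sumM_r (y : 'I_4 -> B) l :
  \sum_k Mf k l * y k = y l + \sum_(a <- S) (cf a * toC (a l 0)) *: (s a * ya y a).
Proof.
rewrite /Mf; under eq_bigr do rewrite mulrDl; rewrite big_split /=; congr (_ + _).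
  rewrite (bigD1 l) //= eqxx mul1r big1 ?addr0 // => k /negbTE ->; by rewrite mul0r.
under eq_bigr do rewrite mulr_suml; rewrite exchange_big /=.
apply: eq_bigr => a _; rewrite /ya mulr_sumr scaler_sumr; apply: eq_bigr => k _.
by rewrite -scalerAl -[s a * (toC (a k 0) *: y k)]scalerAr scalerA; congr (_ *: _); ring.
Qed.

Lemma comm_gen (y : 'I_4 -> B) l :
  (forall a, a \in S -> s a * ya y a = - (ya y a * s a)) ->
  \sum_k (y k * Mf k l + Mf k l * y k) = 2 *: y l.
Proof.
move=> Hy; rewrite big_split /= sumM_l sumM_r addrACA -big_split /= big1_seq.
  by rewrite addr0 -[(2 : C)]/(1 + 1) scalerDl scale1r.
by move=> a /andP [_ Ha]; rewrite -scalerDr Hy // subrr scaler0.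
Qed.

Definition Fx : B := \sum_k (x k * xi k + xi k * x k).
Definition Del : B := \sum_k xi k * xi k.

Lemma XD : Xs * Dr + Dr * Xs = Fx.
Proof.
have hx : forall j l, com (x j) (e l) by move=> j l; rewrite /com -Hex.
have hxi : forall j l, com (xi j) (e l) by move=> j l; rewrite /com -Hexi.
rewrite /Xs /Dr cliff2 // => j k.
rewrite -[LHS]opprB -[RHS]opprB !HM Mf_sym //.
Qed.

Lemma ring_id1 (p q r : B) : p * r = r * p ->
  (p * q + q * p) * r - r * (p * q + q * p) = p * (q * r - r * q) + (q * r - r * q) * p.
Proof.
move=> H; rewrite mulrDl mulrDr !mulrBr !mulrBl !mulrA.
rewrite -(mulrA q p r) H mulrA -H opprD addrACA.
by [].
Qed.

Lemma ring_id2 (q r : B) :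
  (q * q) * r - r * (q * q) = q * (q * r - r * q) + (q * r - r * q) * q.
Proof. by rewrite mulrBr mulrBl !mulrA addrA subrK. Qed.

Lemma Fx_x l : Fx * x l - x l * Fx = 2 *: x l.
Proof.
rewrite -(comm_gen l); last first.
  by move=> a Ha; apply: s_anti => // j; apply: refl_x.
rewrite /Fx mulr_suml mulr_sumr -sumrB; apply: eq_bigr => k _.
by rewrite -HM ring_id1.
Qed.

Lemma Del_x l : Del * x l - x l * Del = 2 *: xi l.
Proof.
rewrite -(comm_gen l); last first.
  by move=> a Ha; apply: s_anti => // j; apply: refl_xi.
rewrite /Del mulr_suml mulr_sumr -sumrB; apply: eq_bigr => k _.
by rewrite -HM ring_id2.
Qed.

Lemma subDD (p q r t : B) : (p - q) + (r - t) = (p + r) - (q + t).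
Proof. by rewrite addrACA opprD. Qed.

Lemma sub4 (p q r t : B) : (p - q) - (r - t) = (p - r) - (q - t).
Proof. by rewrite !opprB !subDD [r + q]addrC. Qed.

Lemma cm_acm (u v w : B) : u * (v * w + w * v) - (v * w + w * v) * u =
  ((u * v + v * u) * w - w * (u * v + v * u)) - (v * (u * w + w * u) - (u * w + w * u) * v).
Proof.
rewrite !mulrDr !mulrDl !mulrA opprB subDD.
rewrite [X in _ = X - _]addrACA [X in _ = _ - X]addrC [X in _ = _ - X]addrACA addrKA.
by [].
Qed.

Definition inS (y : B) := [/\ forall j, com y (x j), forall j, com y (xi j) &
   forall g, inW m1 m2 g -> com y (piW g)].

Lemma inS_e j : inS (e j).
Proof. by split=> [k|k|g Hg]; rewrite /com ?Hex ?Hexi ?HepiW. Qed.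
Lemma inSD y z : inS y -> inS z -> inS (y + z).
Proof. by case=> h1 h2 h3 [k1 k2 k3]; split=> *; apply: comD; auto. Qed.
Lemma inSN y : inS y -> inS (- y).
Proof. by case=> h1 h2 h3; split=> *; apply: comN; auto. Qed.
Lemma inSB y z : inS y -> inS z -> inS (y - z).
Proof. by move=> ? ?; apply: inSD => //; apply: inSN. Qed.
Lemma inSM y z : inS y -> inS z -> inS (y * z).
Proof. by case=> h1 h2 h3 [k1 k2 k3]; split=> *; apply: comM; auto. Qed.
Lemma inSZ c y : inS y -> inS (c *: y).
Proof. by case=> h1 h2 h3; split=> *; apply: comZ; auto. Qed.
Lemma inS1 : inS 1.
Proof. by split=> *; apply: com1. Qed.
Lemma inS0 : inS 0.
Proof. by split=> *; apply: com0. Qed.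
Lemma inS_sum (I : Type) (r : seq I) (P : pred I) (F : I -> B) :
  (forall i, P i -> inS (F i)) -> inS (\sum_(i <- r | P i) F i).
Proof. move=> H; elim/big_rec: _ => [|i y Pi Hy]; [exact: inS0 | exact: inSD (H _ Pi) Hy]. Qed.
Lemma inS_prod (I : Type) (r : seq I) (P : pred I) (F : I -> B) :
  (forall i, P i -> inS (F i)) -> inS (\prod_(i <- r | P i) F i).
Proof. move=> H; elim/big_rec: _ => [|i y Pi Hy]; [exact: inS1 | exact: inSM (H _ Pi) Hy]. Qed.
Lemma inS_gam u : inS (gam u).
Proof. by rewrite /gam /gam1 /lin; apply: inS_sum => j _; apply: inSZ; apply: inS_e. Qed.

Lemma inS_Fx c : inS c -> com Fx c.
Proof.
case=> h1 h2 _; rewrite /Fx; apply: com_sum => k _.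
by apply: comD; apply: comM; apply: com_sym.
Qed.
Lemma inS_Del c : inS c -> com Del c.
Proof.
case=> h1 h2 _; rewrite /Del; apply: com_sum => k _.
by apply: comM; apply: com_sym.
Qed.
Lemma inS_X2 c : inS c -> com (Xs * Xs) c.
Proof.
case=> h1 h2 _; rewrite Xs2; apply: com_sum => k _.
by apply: comM; apply: com_sym.
Qed.
Lemma inS_D2 c : inS c -> com (Dr * Dr) c.
Proof.
case=> h1 h2 _; rewrite Dr2; apply: com_sum => k _.
by apply: comM; apply: com_sym.
Qed.

Lemma comm_lin (y : 'I_4 -> B) a : (forall l, com a (y l)) ->
  (\sum_l y l * e l) * a - a * (\sum_l y l * e l) = \sum_l y l * (e l * a - a * e l).
Proof.
move=> H; rewrite mulr_suml mulr_sumr -sumrB; apply: eq_bigr => l _.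
by rewrite mulrBr !mulrA (H l).
Qed.

Lemma comm_sum_lin (G : B) (y c : 'I_4 -> B) : (forall l, com G (c l)) ->
  G * (\sum_l y l * c l) - (\sum_l y l * c l) * G = \sum_l (G * y l - y l * G) * c l.
Proof.
move=> H; rewrite mulr_suml mulr_sumr -sumrB; apply: eq_bigr => l _.
by rewrite mulrBl !mulrA -[y l * c l * G]mulrA -(H l) mulrA.
Qed.

Lemma Pop_even (D X a : B) :
  Pop D X false a = a - (1 / 2 : C) *: (D * (X * a - a * X) + (X * a - a * X) * D).
Proof. by rewrite /Pop /sbr /= expr0 expr1 !mul1r mulN1r opprK. Qed.

Lemma half_2 (y : B) : (1 / 2 : C) *: (2 *: y) = y.
Proof. by rewrite -[2 *: y]/((1 + 1) *: y) scalerDl scale1r half2. Qed.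

Lemma Pcom_X a : inS a -> com (Pop Dr Xs false a) Xs.
Proof.
move=> Ha; rewrite Pop_even.
set b := Xs * a - a * Xs.
have hc : forall l, inS (e l * a - a * e l).
  by move=> l; apply: inSB; apply: inSM => //; apply: inS_e.
have hb : b = \sum_l x l * (e l * a - a * e l).
  by rewrite /b /Xs comm_lin // => l; case: Ha.
have hXb : Xs * b + b * Xs = 0.
  rewrite /b mulrBr mulrBl !mulrA addrA subrK.
  by rewrite (inS_X2 Ha) mulrA subrr.
have hFb : Fx * b - b * Fx = 2 *: b.
  rewrite hb comm_sum_lin; last by move=> l; apply: inS_Fx.
  rewrite scaler_sumr; apply: eq_bigr => l _; by rewrite Fx_x scalerAl.
have hb0 : Xs * a - a * Xs = b by [].
clearbody b.
apply/eqP; rewrite /com eq_sym -subr_eq0; apply/eqP.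
rewrite mulrBr mulrBl sub4 -scalerAr -scalerAl -scalerBr hb0.
rewrite cm_acm XD hFb hXb mul0r mulr0 subrr subr0 half_2.
by rewrite subrr.
Qed.

Lemma Pcom_D a : inS a -> com (Pop Dr Xs false a) Dr.
Proof.
move=> Ha; rewrite Pop_even.
set b := Xs * a - a * Xs.
have hc : forall l, inS (e l * a - a * e l).
  by move=> l; apply: inSB; apply: inSM => //; apply: inS_e.
have hb : b = \sum_l x l * (e l * a - a * e l).
  by rewrite /b /Xs comm_lin // => l; case: Ha.
have hb0 : Xs * a - a * Xs = b by [].
clearbody b.
have hDa : Dr * a - a * Dr = \sum_l xi l * (e l * a - a * e l).
  by rewrite /Dr comm_lin // => l; case: Ha.
have hDb : Dr * (Dr * b + b * Dr) - (Dr * b + b * Dr) * Dr = 2 *: (Dr * a - a * Dr).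
  rewrite mulrDr mulrDl !mulrA addrKA -[b * Dr * Dr]mulrA Dr2 -/Del.
  rewrite hb comm_sum_lin; last by move=> l; apply: inS_Del.
  rewrite hDa scaler_sumr; apply: eq_bigr => l _; by rewrite Del_x scalerAl.
apply/eqP; rewrite /com eq_sym -subr_eq0; apply/eqP.
rewrite mulrBr mulrBl sub4 -scalerAr -scalerAl -scalerBr hDb half_2.
by rewrite subrr.
Qed.

Lemma comm_Pop (y a : B) : com y Dr -> com y Xs -> com y a -> com y (Pop Dr Xs false a).
Proof.
move=> hD hX ha; rewrite Pop_even; apply: com_sym.
apply: comB; first exact: com_sym.
apply: comZ; apply: comD; apply: comM; try exact: com_sym;
  by apply: comB; apply: comM; apply: com_sym.
Qed.

Lemma acomm_Pop (G a : B) : acom G Dr -> acom G Xs -> com G a -> com G (Pop Dr Xs false a).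
Proof.
move=> hD hX ha; rewrite Pop_even; apply: com_sym.
have hb : acom (Xs * a - a * Xs) G.
  apply: acomD; last apply: acomN.
    by apply: acomMacom; [exact: acom_sym | exact: com_sym].
  by apply: comMacom; [exact: com_sym | exact: acom_sym].
apply: comB; first exact: com_sym.
apply: comZ; apply: comD; apply: acomMcom => //; exact: acom_sym.
Qed.

Lemma gamw_com k (v : 'I_k -> 'cV[C]_4) (w : B) :
  (forall g : 'S_k, com (\prod_(i < k) gam1 e (v (g i))) w) -> com (gamw e v) w.
Proof.
move=> H; rewrite /gamw; apply: comZ; apply: com_sum => g _; apply: comZ; exact: H.
Qed.
Lemma gamw_acom k (v : 'I_k -> 'cV[C]_4) (w : B) :
  (forall g : 'S_k, acom (\prod_(i < k) gam1 e (v (g i))) w) -> acom (gamw e v) w.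
Proof.
move=> H; rewrite /gamw; apply: acomZ; apply: acom_sum => g _; apply: acomZ; exact: H.
Qed.
Lemma inS_gamw k (v : 'I_k -> 'cV[C]_4) : inS (gamw e v).
Proof.
rewrite /gamw; apply: inSZ; apply: inS_sum => g _; apply: inSZ.
by apply: inS_prod => i _; apply: inS_gam.
Qed.

Lemma prod2 (F : 'I_2 -> B) : \prod_(i < 2) F i = F ord0 * F (lift ord0 ord0).
Proof. by rewrite !big_ord_recl big_ord0 mulr1. Qed.

Lemma gam_ev i : gam1 e (x1234 R i) = e i.
Proof.
rewrite /gam1 /lin /x1234 (bigD1 i) //= big1 ?addr0.
  by rewrite /cvC !mxE eqxx toCE rmorph1 scale1r.
by move=> j /negbTE Hj; rewrite /cvC !mxE Hj toCE rmorph0 scale0r.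
Qed.

Lemma e_scom j k : scom (k != j) (e k) (e j).
Proof.
rewrite /scom; case: eqP => [->|/eqP Hkj]; first by rewrite expr0 scale1r.
have := He k j; rewrite (negbTE Hkj) mulr0 scale0r => /eqP; rewrite addr_eq0 => /eqP ->.
by rewrite expr1 scaleN1r.
Qed.

Definition Gam : B := gamw e (x1234 R).

Lemma Gam_acom_e j : acom Gam (e j).
Proof.
apply: gamw_acom => g.
have H := @scom_prod _ _ _ (fun i => gam1 e (x1234 R (g i))) (fun i => g i != j) (e j).
have Hodd : odd (\sum_(i < 4) (g i != j)) = true.
  have E : forall i, (g i != j) = (i != (g^-1)%g j).
    by move=> i; rewrite -{1}(permKV g j) (inj_eq perm_inj).
  rewrite (eq_bigr _ (fun i _ => congr1 nat_of_bool (E i))).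
  move: ((g^-1)%g j) => k.
  by rewrite !big_ord_recl big_ord0; case: k => [[|[|[|[|]]]]] //=.
have H' := H (fun i => etrans (congr1 (fun t => t * e j) (gam_ev (g i)))
   (etrans (e_scom j (g i)) (congr1 (fun t => _ *: (e j * t)) (esym (gam_ev (g i)))))).
by move: H'; rewrite /scom Hodd expr1 scaleN1r.
Qed.

Lemma inS_Gam : inS Gam.
Proof. exact: inS_gamw. Qed.

Lemma acom_lin (y : 'I_4 -> B) (G : B) : (forall j, com G (y j)) -> (forall j, acom G (e j)) ->
  acom G (\sum_j y j * e j).
Proof.
move=> H1 H2; apply: acom_sym; apply: acom_sum => j _.
by apply: comMacom; [exact: com_sym | exact: acom_sym].
Qed.

Lemma Gam_acom_X : acom Gam Xs.
Proof. by apply: acom_lin; [by move=> j; case: inS_Gam | exact: Gam_acom_e]. Qed.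
Lemma Gam_acom_D : acom Gam Dr.
Proof. by apply: acom_lin; [by move=> j; case: inS_Gam | exact: Gam_acom_e]. Qed.

Lemma Gam_acom_gam u : acom Gam (gam u).
Proof. apply: acom_sym; apply: gam_acom_of => j; apply: acom_sym; exact: Gam_acom_e. Qed.

Lemma Gam_com_gamw2 (v : 'I_2 -> 'cV[C]_4) : com Gam (gamw e v).
Proof.
apply: com_sym; apply: gamw_com => g; rewrite prod2.
by apply: acomMcom; apply: acom_sym; apply: Gam_acom_gam.
Qed.

Definition pA (u : 'cV[C]_4) := forall j : 'I_4, (2 <= j)%N -> u j 0 = 0.
Definition pB (u : 'cV[C]_4) := forall j : 'I_4, (j < 2)%N -> u j 0 = 0.

Lemma bil_AB u w : pA u -> pB w -> bil u w = 0.
Proof.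
move=> hu hw; rewrite /bil big1 // => j _.
by case: (ltnP j 2) => h; [rewrite hw // mulr0 | rewrite hu // mul0r].
Qed.

Lemma com_AB2 u v w t : pA u -> pA v -> pB w -> pB t ->
  com (gam u * gam v) (gam w * gam t).
Proof.
move=> hu hv hw ht.
have h1 : forall z, pB z -> com (gam u * gam v) (gam z).
  by move=> z hz; apply: acomMcom; apply: gam_acom; apply: bil_AB.
by apply: com_sym; apply: comM; apply: com_sym; apply: h1.
Qed.

Definition o0 : 'I_4 := @Ordinal 4 0 isT.
Definition o1 : 'I_4 := @Ordinal 4 1 isT.

Lemma gamA u : pA u -> gam u = u o0 0 *: e o0 + u o1 0 *: e o1.
Proof.
move=> hu; rewrite /gam /gam1 /lin (bigD1 o0) //= (bigD1 o1) //= big1 ?addr0 //.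
move=> j /andP [H1 H0]; rewrite hu ?scale0r //.
by case: j H0 H1 => [[|[|k]] Hk].
Qed.

Lemma e_sq j : e j * e j = 1.
Proof. by rewrite -[LHS]half2 He eqxx mulr1 half_2. Qed.

Lemma e10 : e o1 * e o0 = - (e o0 * e o1).
Proof.
have := He o0 o1; rewrite /= mulr0 scale0r => /eqP; rewrite addr_eq0 => /eqP ->.
by rewrite opprK.
Qed.

Lemma prodA u v : pA u -> pA v -> gam u * gam v =
  (u o0 0 * v o0 0 + u o1 0 * v o1 0) *: 1 + (u o0 0 * v o1 0 - u o1 0 * v o0 0) *: (e o0 * e o1).
Proof.
move=> hu hv; rewrite (gamA hu) (gamA hv) mulrDl !mulrDr !scaleMM !e_sq e10 scalerN.
by rewrite scalerDl scalerBl [- _ + _]addrC addrACA.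
Qed.

Lemma com2D u v w t : pA u -> pA v -> pA w -> pA t ->
  com (gam u * gam v) (gam w * gam t).
Proof.
move=> hu hv hw ht; rewrite (prodA hu hv) (prodA hw ht).
apply: comD; first by apply: comZ; apply: com1.
apply: comZ; apply: com_sym; apply: comD; apply: comZ; [exact: com1 | exact: com_refl].
Qed.

Lemma refl_comm (a b : 'cV[R]_4) : a^T *m b = 0 -> b^T *m a = 0 ->
  refl a *m refl b = refl b *m refl a.
Proof.
move=> hab hba.
rewrite /refl !mulmxBl !mulmxBr !mul1mx !mulmx1 -!scalemxAl -!scalemxAr.
rewrite !mulmxA -[a *m a^T *m b]mulmxA -[b *m b^T *m a]mulmxA hab hba.
by rewrite !mulmx0 !mul0mx !scaler0 !subr0 addrAC.
Qed.

Lemma alphaT_beta (p q : nat) : (alpha R m1 p)^T *m (beta R m2 q) = 0.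
Proof.
apply/matrixP => i j; rewrite !ord1 !mxE !big_ord_recl big_ord0 !mxE /=.
by rewrite !mul0r !mulr0 !addr0.
Qed.
Lemma betaT_alpha (p q : nat) : (beta R m2 q)^T *m (alpha R m1 p) = 0.
Proof.
apply/matrixP => i j; rewrite !ord1 !mxE !big_ord_recl big_ord0 !mxE /=.
by rewrite !mul0r !mulr0 !addr0.
Qed.

Lemma alpha_pA p : pA (cvC (alpha R m1 p)).
Proof.
by move=> [[|[|[|[|k]]]] Hk] //= _; rewrite /cvC !mxE /= toCE rmorph0.
Qed.
Lemma beta_pB q : pB (cvC (beta R m2 q)).
Proof.
by move=> [[|[|k]] Hk] //= _; rewrite /cvC !mxE /= toCE rmorph0.
Qed.

Lemma root_cross a (j k : 'I_4) : a \in S -> (j < 2)%N -> (2 <= k)%N -> a j 0 * a k 0 = 0.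
Proof.
rewrite /posroots mem_cat => /orP [] /mapP [p _ ->] hj hk.
  move: (alpha_pA p hk); rewrite /cvC mxE toCE => /eqP.
  by rewrite (inj_eq (fmorph_inj _)) => /eqP ->; rewrite mulr0.
move: (beta_pB p hj); rewrite /cvC mxE toCE => /eqP.
by rewrite (inj_eq (fmorph_inj _)) => /eqP ->; rewrite mul0r.
Qed.

Lemma Mf_cross (j k : 'I_4) : (j < 2)%N -> (2 <= k)%N -> Mf j k = 0.
Proof.
move=> hj hk; rewrite /Mf.
have -> : (j == k) = false by apply/negbTE; apply/eqP => E; move: hj hk; rewrite E; lia.
rewrite add0r big1_seq // => a /andP [_ Ha].
by rewrite -mulrA toCE -rmorphM /= (root_cross Ha hj hk) rmorph0 mulr0 scale0r.
Qed.

Lemma gam_cvC (a : 'cV[R]_4) : gam (cvC a) = \sum_k toC (a k 0) *: e k.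
Proof. by rewrite /gam /gam1 /lin; apply: eq_bigr => k _; rewrite /cvC mxE. Qed.

Lemma st_acom_gen (y : 'I_4 -> B) a : a \in S ->
  (forall j k, com (y j) (e k)) ->
  (forall j, s a * y j = (y j - (2 * toC (a j 0)) *: ya y a) * s a) ->
  acom (s a * gam (cvC a)) (\sum_j y j * e j).
Proof.
move=> Ha hye hy.
have ss := s2 Ha.
have W := root_W Ha.
have hy' : forall j, y j * s a = s a * (y j - (2 * toC (a j 0)) *: ya y a).
  move=> j; have -> : y j * s a = s a * (s a * y j) * s a by rewrite mulrA ss mul1r.
  by rewrite hy !mulrA -[_ * s a * s a]mulrA ss mulr1.
have es : forall j, e j * s a = s a * e j by move=> j; apply: HepiW.
have bilaa : bil (cvC a) (cvC a) = 1.
  by rewrite /bil -(sumsq Ha); apply: eq_bigr => k _; rewrite /cvC mxE.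
have gg : gam (cvC a) * gam (cvC a) = 1.
  by rewrite -[LHS]half2 gam_anti bilaa mulr1 half_2.
have ge : forall j, gam (cvC a) * e j = (2 * toC (a j 0)) *: 1 - e j * gam (cvC a).
  move=> j; apply/eqP; rewrite eq_sym subr_eq; apply/eqP.
  rewrite -(gam_ev j) gam_anti /bil (bigD1 j) //= big1 ?addr0.
    by rewrite /x1234 /cvC !mxE eqxx toCE rmorph1 mulr1.
  by move=> k /negbTE hk; rewrite /x1234 /cvC !mxE hk toCE rmorph0 mulr0.
have gy : forall j, com (gam (cvC a)) (y j).
  by move=> j; apply: gam_com_of => k; apply: com_sym; apply: hye.
have P1 : (\sum_j y j * e j) * (s a * gam (cvC a)) =
          s a * ((\sum_j y j * e j) * gam (cvC a) - 2 *: ya y a).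
  rewrite mulr_suml.
  transitivity (\sum_j s a * ((y j - (2 * toC (a j 0)) *: ya y a) * e j * gam (cvC a))).
    apply: eq_bigr => j _.
    by rewrite !mulrA -[y j * e j * s a]mulrA es mulrA hy' ?mulrA.
  rewrite -mulr_sumr; congr (_ * _).
  under eq_bigr do rewrite !mulrBl -!scalerAl.
  rewrite sumrB mulr_suml; congr (_ - _).
  transitivity (2 *: (ya y a * gam (cvC a) * gam (cvC a))); last by rewrite -mulrA gg mulr1.
  have gsum : ya y a * gam (cvC a) = \sum_j toC (a j 0) *: (ya y a * e j).
    by rewrite gam_cvC mulr_sumr; apply: eq_bigr => j _; rewrite -scalerAr.
  rewrite gsum mulr_suml scaler_sumr; apply: eq_bigr => j _.
  by rewrite -scalerAl scalerA.
have P2 : (s a * gam (cvC a)) * (\sum_j y j * e j) =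
          s a * (2 *: ya y a - (\sum_j y j * e j) * gam (cvC a)).
  rewrite -mulrA; congr (_ * _).
  rewrite mulr_sumr [X in _ = _ - X]mulr_suml.
  transitivity (\sum_j ((2 * toC (a j 0)) *: y j - y j * e j * gam (cvC a))).
    apply: eq_bigr => j _.
    by rewrite mulrA (gy j) -[y j * gam (cvC a) * e j]mulrA ge mulrBr -scalerAr mulr1 mulrA.
  rewrite sumrB; congr (_ - _).
  by rewrite /ya scaler_sumr; apply: eq_bigr => j _; rewrite scalerA.
by rewrite /acom P2 P1 -[RHS]mulrN opprB.
Qed.

Lemma st_acom_X a : a \in S -> acom (s a * gam (cvC a)) Xs.
Proof.
move=> Ha; apply: st_acom_gen => //; last by move=> j; apply: refl_x.
Qed.
Lemma st_acom_D a : a \in S -> acom (s a * gam (cvC a)) Dr.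
Proof.
move=> Ha; apply: st_acom_gen => //; last by move=> j; apply: refl_xi.
Qed.

Lemma P_com_cross (a1 a2 : B) : inS a1 -> inS a2 ->
  (forall k : 'I_4, (2 <= k)%N -> com a1 (e k)) ->
  (forall j : 'I_4, (j < 2)%N -> com a2 (e j)) -> com a1 a2 ->
  com (Pop Dr Xs false a1) a2.
Proof.
move=> h1 h2 h1e h2e h12; rewrite Pop_even.
have hb : Xs * a1 - a1 * Xs = \sum_l x l * (e l * a1 - a1 * e l).
  by rewrite /Xs comm_lin // => l; case: h1.
rewrite hb; apply: comB => //; apply: comZ.
set c := fun l => e l * a1 - a1 * e l.
have -> : Dr * (\sum_l x l * c l) + (\sum_l x l * c l) * Dr =
   \sum_j \sum_l (xi j * e j * (x l * c l) + x l * c l * (xi j * e j)).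
  rewrite /Dr !mulr_suml.
  under eq_bigr do rewrite mulr_sumr.
  under [X in _ + X]eq_bigr do rewrite mulr_sumr.
  rewrite [X in _ + X]exchange_big -big_split /=.
  by apply: eq_bigr => j _; rewrite -big_split.
apply: com_sum => j _; apply: com_sum => l _.
case: (ltnP l 2) => hl; last first.
  have -> : c l = 0 by rewrite /c (h1e l hl) subrr.
  by rewrite !mulr0 mul0r addr0; apply: com0.
case: (ltnP j 2) => hj.
  have hxi : com (xi j) a2 by apply: com_sym; case: h2.
  have hx : com (x l) a2 by apply: com_sym; case: h2.
  have hej : com (e j) a2 by apply: com_sym; apply: h2e.
  have hel : com (e l) a2 by apply: com_sym; apply: h2e.
  have hc : com (c l) a2 by rewrite /c; apply: comB; apply: comM.
  by apply: comD; apply: comM; apply: comM.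
have hjl : (l == j) = false by apply/negbTE; apply/eqP => E; move: hl hj; rewrite E; lia.
have ec : e j * c l = - (c l * e j).
  have hel : e l * e j = - (e j * e l).
    by apply/eqP; rewrite -addr_eq0 He hjl mulr0 scale0r.
  rewrite /c mulrBr mulrBl opprB !mulrA.
  rewrite -[a1 * e l * e j]mulrA hel mulrN mulrA (h1e j hj).
  rewrite -[e l * a1 * e j]mulrA (h1e j hj) mulrA hel mulNr.
  by rewrite opprK addrC.
have hcxi : c l * xi j = xi j * c l.
  have hc : inS (c l).
    by rewrite /c; apply: inSB; apply: inSM => //; apply: inS_e.
  by case: hc => _ h _; apply: h.
have -> : xi j * e j * (x l * c l) + x l * c l * (xi j * e j) = 0.
  rewrite !mulrA -[xi j * e j * x l]mulrA Hex mulrA.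
  rewrite -[xi j * x l * e j * c l]mulrA ec mulrN.
  rewrite -[x l * c l * xi j]mulrA hcxi mulrA.
  rewrite !mulrA addrC -!mulrBl -opprB HM Mf_sym (Mf_cross hl hj).
  by rewrite oppr0 !mul0r.
exact: com0.
Qed.

Definition pP (p q : 'I_4) (u : 'cV[C]_4) := forall j : 'I_4, j != p -> j != q -> u j 0 = 0.

Lemma gamP p q u : p != q -> pP p q u -> gam u = u p 0 *: e p + u q 0 *: e q.
Proof.
move=> hpq hu; rewrite /gam /gam1 /lin (bigD1 p) //= (bigD1 q) /=; last by rewrite eq_sym hpq.
rewrite big1 ?addr0 // => j /andP [Hq Hp]; by rewrite hu ?scale0r.
Qed.

Lemma e_anti p q : p != q -> e q * e p = - (e p * e q).
Proof.
move=> hpq; have := He p q; rewrite (negbTE hpq) mulr0 scale0r => /eqP.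
by rewrite addr_eq0 => /eqP ->; rewrite opprK.
Qed.

Lemma prodP p q u v : p != q -> pP p q u -> pP p q v -> gam u * gam v =
  (u p 0 * v p 0 + u q 0 * v q 0) *: 1 + (u p 0 * v q 0 - u q 0 * v p 0) *: (e p * e q).
Proof.
move=> hpq hu hv; rewrite (gamP hpq hu) (gamP hpq hv) mulrDl !mulrDr !scaleMM !e_sq (e_anti hpq) scalerN.
by rewrite scalerDl scalerBl [- _ + _]addrC addrACA.
Qed.

Lemma com2DP p q u v w t : p != q -> pP p q u -> pP p q v -> pP p q w -> pP p q t ->
  com (gam u * gam v) (gam w * gam t).
Proof.
move=> hpq hu hv hw ht; rewrite (prodP hpq hu hv) (prodP hpq hw ht).
apply: comD; first by apply: comZ; apply: com1.
apply: comZ; apply: com_sym; apply: comD; apply: comZ; [exact: com1 | exact: com_refl].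
Qed.

Definition o2 : 'I_4 := @Ordinal 4 2 isT.
Definition o3 : 'I_4 := @Ordinal 4 3 isT.

Lemma pA_P u : pA u -> pP o0 o1 u.
Proof. by move=> hu [[|[|k]] Hk] // _ _; apply: hu. Qed.
Lemma pB_P u : pB u -> pP o2 o3 u.
Proof. by move=> hu [[|[|[|[|k]]]] Hk] // _ _; apply: hu. Qed.

Lemma com2DA u v w t : pA u -> pA v -> pA w -> pA t -> com (gam u * gam v) (gam w * gam t).
Proof. by move=> *; apply: (@com2DP o0 o1) => //; apply: pA_P. Qed.
Lemma com2DB u v w t : pB u -> pB v -> pB w -> pB t -> com (gam u * gam v) (gam w * gam t).
Proof. by move=> *; apply: (@com2DP o2 o3) => //; apply: pB_P. Qed.

Lemma zpair1_pA i : pA (zpair R 1 i).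
Proof.
move=> [[|[|k]] Hk] // _; rewrite /zpair; case: ifP => _; by rewrite /zvec mxE.
Qed.
Lemma zpair2_pB i : pB (zpair R 2 i).
Proof.
move=> [[|[|k]] Hk] // _; rewrite /zpair; case: ifP => _; by rewrite /zvec mxE.
Qed.

Lemma ev_pB (k : 'I_4) : (2 <= k)%N -> pB (x1234 R k).
Proof.
move=> hk j hj; rewrite /x1234 /cvC !mxE.
have -> : (j == k) = false by apply/negbTE; apply/eqP => E; move: hj hk; rewrite E; lia.
by rewrite toCE rmorph0.
Qed.
Lemma ev_pA (k : 'I_4) : (k < 2)%N -> pA (x1234 R k).
Proof.
move=> hk j hj; rewrite /x1234 /cvC !mxE.
have -> : (j == k) = false by apply/negbTE; apply/eqP => E; move: hj hk; rewrite E; lia.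
by rewrite toCE rmorph0.
Qed.

Lemma bil_sym u v : bil u v = bil v u.
Proof. by rewrite /bil; apply: eq_bigr => j _; rewrite mulrC. Qed.

Lemma acom_A_e u (k : 'I_4) : pA u -> (2 <= k)%N -> acom (gam u) (e k).
Proof.
move=> hu hk; rewrite -(gam_ev k); apply: gam_acom; apply: bil_AB => //; exact: ev_pB.
Qed.
Lemma acom_B_e u (k : 'I_4) : pB u -> (k < 2)%N -> acom (gam u) (e k).
Proof.
move=> hu hk; rewrite -(gam_ev k); apply: gam_acom; rewrite bil_sym; apply: bil_AB => //.
exact: ev_pA.
Qed.

Lemma com_BA2 u v w t : pB u -> pB v -> pA w -> pA t ->
  com (gam u * gam v) (gam w * gam t).
Proof. by move=> *; apply: com_sym; apply: com_AB2. Qed.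

Definition a1 : B := gamw e (zpair R 1).
Definition a2 : B := gamw e (zpair R 2).

Lemma gamw2_com (v : 'I_2 -> 'cV[C]_4) (w : B) :
  (forall i j, com (gam (v i) * gam (v j)) w) -> com (gamw e v) w.
Proof. by move=> H; apply: gamw_com => g; rewrite prod2; apply: H. Qed.

Lemma a1_e (k : 'I_4) : (2 <= k)%N -> com a1 (e k).
Proof.
move=> hk; apply: gamw2_com => i j; apply: acomMcom; apply: acom_A_e => //; exact: zpair1_pA.
Qed.
Lemma a2_e (k : 'I_4) : (k < 2)%N -> com a2 (e k).
Proof.
move=> hk; apply: gamw2_com => i j; apply: acomMcom; apply: acom_B_e => //; exact: zpair2_pB.
Qed.
Lemma a1_a2 : com a1 a2.
Proof.
apply: gamw2_com => i j; apply: com_sym; apply: gamw2_com => k l.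
apply: com_BA2; (exact: zpair1_pA || exact: zpair2_pB).
Qed.

Lemma a1_A u v : pA u -> pA v -> com a1 (gam u * gam v).
Proof. by move=> hu hv; apply: gamw2_com => i j; apply: com2DA => //; exact: zpair1_pA. Qed.
Lemma a1_B u v : pB u -> pB v -> com a1 (gam u * gam v).
Proof. by move=> hu hv; apply: gamw2_com => i j; apply: com_AB2 => //; exact: zpair1_pA. Qed.
Lemma a2_A u v : pA u -> pA v -> com a2 (gam u * gam v).
Proof. by move=> hu hv; apply: gamw2_com => i j; apply: com_BA2 => //; exact: zpair2_pB. Qed.
Lemma a2_B u v : pB u -> pB v -> com a2 (gam u * gam v).
Proof. by move=> hu hv; apply: gamw2_com => i j; apply: com2DB => //; exact: zpair2_pB. Qed.

Lemma alpha_in p : (0 < p <= m1)%N -> alpha R m1 p \in S.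
Proof.
move=> hp; rewrite /posroots mem_cat; apply/orP; left; apply/mapP; exists p => //.
by rewrite mem_iota; lia.
Qed.
Lemma beta_in p : (0 < p <= m2)%N -> beta R m2 p \in S.
Proof.
move=> hp; rewrite /posroots mem_cat; apply/orP; right; apply/mapP; exists p => //.
by rewrite mem_iota; lia.
Qed.

Lemma com_s_gam a u : a \in S -> com (s a) (gam u).
Proof.
move=> Ha; apply: com_sym; apply: gam_com_of => j; rewrite /com HepiW //; exact: root_W.
Qed.
Lemma com_s_inS y a : inS y -> a \in S -> com (s a) y.
Proof. by case=> _ _ h Ha; apply: com_sym; apply: h; apply: root_W. Qed.

Lemma stst a b : a \in S -> b \in S ->
  (s a * gam (cvC a)) * (s b * gam (cvC b)) = (s a * s b) * (gam (cvC a) * gam (cvC b)).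
Proof.
move=> Ha Hb; rewrite !mulrA -[s a * gam (cvC a) * s b]mulrA.
by rewrite -(com_s_gam _ Hb) !mulrA.
Qed.

Definition rr a b : B := - ((s a * gam (cvC a)) * (s b * gam (cvC b))).

Lemma rr_X a b : a \in S -> b \in S -> com (rr a b) Xs.
Proof. by move=> Ha Hb; apply: comN; apply: acomMcom; apply: st_acom_X. Qed.
Lemma rr_D a b : a \in S -> b \in S -> com (rr a b) Dr.
Proof. by move=> Ha Hb; apply: comN; apply: acomMcom; apply: st_acom_D. Qed.
Lemma rr_Gam a b : a \in S -> b \in S -> com (rr a b) Gam.
Proof.
move=> Ha Hb; apply: comN; apply: acomMcom; apply: comMacom;
  (apply: com_s_inS => //; exact: inS_Gam) || (apply: acom_sym; exact: Gam_acom_gam).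
Qed.
Lemma rr_com y a b : a \in S -> b \in S -> inS y -> com y (gam (cvC a) * gam (cvC b)) ->
  com (rr a b) y.
Proof.
move=> Ha Hb hy hg; rewrite /rr stst //; apply: comN.
by apply: comM; [apply: comM; apply: com_s_inS | apply: com_sym].
Qed.



Lemma s_ab a b : a \in S -> b \in S -> a^T *m b = 0 -> b^T *m a = 0 -> com (s a) (s b).
Proof.
move=> Ha Hb h1 h2; rewrite /com -!HpiM; try exact: root_W.
by rewrite (refl_comm h1 h2).
Qed.

Lemma com_gg_s u v a : a \in S -> com (gam u * gam v) (s a).
Proof. by move=> Ha; apply: comM; apply: com_sym; apply: com_s_gam. Qed.

Lemma rr_rr p p' q q' : (0 < p <= m1)%N -> (0 < p' <= m1)%N -> (0 < q <= m2)%N -> (0 < q' <= m2)%N ->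
  com (rr (alpha R m1 p) (alpha R m1 p')) (rr (beta R m2 q) (beta R m2 q')).
Proof.
move=> hp hp' hq hq'.
have Ha := alpha_in hp; have Ha' := alpha_in hp'; have Hb := beta_in hq; have Hb' := beta_in hq'.
rewrite /rr (stst Ha Ha') (stst Hb Hb').
apply: comN; apply: com_sym; apply: comN.
have sab : forall a b, a \in S -> b \in S -> (a = alpha R m1 p \/ a = alpha R m1 p') ->
    (b = beta R m2 q \/ b = beta R m2 q') -> com (s a) (s b).
  move=> a b HA HB [] -> [] ->; apply: s_ab => //;
    (exact: alphaT_beta || exact: betaT_alpha).
have comMM : forall y1 y2 y3 z : B, com y1 z -> com y2 z -> com y3 z -> com (y1 * y2 * y3) z.
  by move=> y1 y2 y3 z h1 h2 h3; apply: comM => //; apply: comM.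
have comR : forall y z1 z2 z3 : B, com y z1 -> com y z2 -> com y z3 -> com y (z1 * z2 * z3).
  by move=> y z1 z2 z3 h1 h2 h3; apply: com_sym; apply: comMM; apply: com_sym.
have pa := alpha_pA; have pb := beta_pB.
apply: comMM; apply: comR.
- by apply: com_sym; apply: sab => //; auto.
- by apply: com_sym; apply: sab => //; auto.
- by apply: com_sym; apply: com_gg_s.
- by apply: com_sym; apply: sab => //; auto.
- by apply: com_sym; apply: sab => //; auto.
- by apply: com_sym; apply: com_gg_s.
- by apply: com_gg_s.
- by apply: com_gg_s.
- by apply: com_BA2.
Qed.

Lemma comZZ (c d : C) (y z : B) : com y z -> com (c *: y) (d *: z).
Proof. by move=> h; apply: comZ; apply: com_sym; apply: comZ; apply: com_sym. Qed.
Lemma comZl (c : C) (y z : B) : com y z -> com (c *: y) z.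
Proof. by move=> h; apply: comZ. Qed.

Lemma in5 (T : eqType) (a y1 y2 y3 y4 y5 : T) : a \in [:: y1; y2; y3; y4; y5] ->
  a = y1 \/ a = y2 \/ a = y3 \/ a = y4 \/ a = y5.
Proof.
rewrite !inE => /orP [/eqP ->|/orP [/eqP ->|/orP [/eqP ->|/orP [/eqP ->|/eqP ->]]]].
- by left.
- by right; left.
- by right; right; left.
- by right; right; right; left.
- by right; right; right; right.
Qed.

Lemma final_sec :
  let Dirac := \sum_(j < 4) xi j * e j in
  let xs := \sum_(j < 4) x j * e j in
  let O := fun k (v : 'I_k -> 'cV[R[i]]_4) => Oop e Dirac xs v in
  let H1 := (1 / 2 : R[i]) *: O 2%N (zpair R 1) in
  let H2 := (1 / 2 : R[i]) *: O 2%N (zpair R 2) in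
  let Z := O 4%N (x1234 R) in
  let st := fun a : 'cV[R]_4 => piW (refl a) * gam1 e (cvC a) in
  let r1 := - (st (alpha R m1 m1) * st (alpha R m1 1)) in
  let r2 := - (st (beta R m2 m2) * st (beta R m2 1)) in
  let t0 := [:: H1; H2; Z; r1; r2] in
  forall a b, a \in t0 -> b \in t0 -> a * b = b * a.
Proof.
move=> Dirac xs O H1 H2 Z st r1 r2 t0.
pose PA1 := Pop Dr Xs false a1.
pose PA2 := Pop Dr Xs false a2.
pose PG := Pop Dr Xs false Gam.
have eH1 : H1 = (1 / 2 : C) *: ((- (1 / 2) : C) *: PA1) by [].
have eH2 : H2 = (1 / 2 : C) *: ((- (1 / 2) : C) *: PA2) by [].
have eZ : Z = (- (1 / 2) : C) *: PG by [].
have ha : (0 < m1 <= m1)%N by rewrite Hm1 leqnn.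
have ha1 : (0 < 1 <= m1)%N by rewrite Hm1.
have hb : (0 < m2 <= m2)%N by rewrite Hm2 leqnn.
have hb1 : (0 < 1 <= m2)%N by rewrite Hm2.
have Ha := alpha_in ha; have Ha1 := alpha_in ha1.
have Hb := beta_in hb; have Hb1 := beta_in hb1.
have er1 : r1 = rr (alpha R m1 m1) (alpha R m1 1) by [].
have er2 : r2 = rr (beta R m2 m2) (beta R m2 1) by [].
have i1 : inS a1 := inS_gamw _.
have i2 : inS a2 := inS_gamw _.
have g1D : com PA1 Dr := Pcom_D i1.
have g1X : com PA1 Xs := Pcom_X i1.
have g2D : com PA2 Dr := Pcom_D i2.
have g2X : com PA2 Xs := Pcom_X i2.
have r1D : com r1 Dr by rewrite er1; apply: rr_D.
have r1X : com r1 Xs by rewrite er1; apply: rr_X.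
have r2D : com r2 Dr by rewrite er2; apply: rr_D.
have r2X : com r2 Xs by rewrite er2; apply: rr_X.
have b12 : com PA1 PA2.
  apply: comm_Pop => //; apply: P_com_cross => //.
  - exact: a1_e.
  - exact: a2_e.
  - exact: a1_a2.
have b13 : com PA1 PG.
  apply: comm_Pop => //; apply: com_sym.
  apply: acomm_Pop; [exact: Gam_acom_D | exact: Gam_acom_X | exact: Gam_com_gamw2].
have b23 : com PA2 PG.
  apply: comm_Pop => //; apply: com_sym.
  apply: acomm_Pop; [exact: Gam_acom_D | exact: Gam_acom_X | exact: Gam_com_gamw2].
have b14 : com PA1 r1.
  apply: com_sym; apply: comm_Pop => //; rewrite er1; apply: rr_com => //.
  by apply: a1_A; apply: alpha_pA.
have b15 : com PA1 r2.
  apply: com_sym; apply: comm_Pop => //; rewrite er2; apply: rr_com => //.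
  by apply: a1_B; apply: beta_pB.
have b24 : com PA2 r1.
  apply: com_sym; apply: comm_Pop => //; rewrite er1; apply: rr_com => //.
  by apply: a2_A; apply: alpha_pA.
have b25 : com PA2 r2.
  apply: com_sym; apply: comm_Pop => //; rewrite er2; apply: rr_com => //.
  by apply: a2_B; apply: beta_pB.
have b34 : com PG r1.
  by apply: com_sym; apply: comm_Pop => //; rewrite er1; apply: rr_Gam.
have b35 : com PG r2.
  by apply: com_sym; apply: comm_Pop => //; rewrite er2; apply: rr_Gam.
have b45 : com r1 r2 by rewrite er1 er2; apply: rr_rr.
have c12 : com H1 H2 by rewrite eH1 eH2; do 2 apply: comZZ.
have c13 : com H1 Z by rewrite eH1 eZ; apply: comZZ; apply: comZl.
have c23 : com H2 Z by rewrite eH2 eZ; apply: comZZ; apply: comZl.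
have c14 : com H1 r1 by rewrite eH1; do 2 apply: comZl.
have c15 : com H1 r2 by rewrite eH1; do 2 apply: comZl.
have c24 : com H2 r1 by rewrite eH2; do 2 apply: comZl.
have c25 : com H2 r2 by rewrite eH2; do 2 apply: comZl.
have c34 : com Z r1 by rewrite eZ; apply: comZl.
have c35 : com Z r2 by rewrite eZ; apply: comZl.
move=> a b; rewrite /t0.
move=> /in5 [->|[->|[->|[->|->]]]] /in5 [->|[->|[->|[->|->]]]]; try done;
  first [ exact: c12 | exact: (esym c12) | exact: c13 | exact: (esym c13)
        | exact: c14 | exact: (esym c14) | exact: c15 | exact: (esym c15)
        | exact: c23 | exact: (esym c23) | exact: c24 | exact: (esym c24)
        | exact: c25 | exact: (esym c25) | exact: c34 | exact: (esym c34)
        | exact: c35 | exact: (esym c35) | exact: b45 | exact: (esym b45) ].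
Qed.
End Main.

Unset Implicit Arguments.

(* B is an arbitrary complex algebra receiving the generators of H_kappa (x) C
   subject to the defining relations (universal formulation):
   x j = x_j (x) 1, xi j = xi_j (x) 1, piW w = w (x) 1, e j = 1 (x) e_j. *)
Theorem proposition4p2 (R : realType) (m1 m2 : nat) (Hm1 : (0 < m1)%N) (Hm2 : (0 < m2)%N)
  (kappa : 'cV[R]_4 -> R[i])
  (Hkappa : forall (g : 'M[R]_4) (a : 'cV[R]_4),
      inW m1 m2 g -> a \in rootsys R m1 m2 -> kappa (g *m a) = kappa a)
  (B : algType R[i]) (x xi e : 'I_4 -> B) (piW : 'M[R]_4 -> B)
  (* CW: group algebra of W *)
  (Hpi1 : piW 1%:M = 1)
  (HpiM : forall g h, inW m1 m2 g -> inW m1 m2 h -> piW (g *m h) = piW g * piW h)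
  (* semidirect product relations:  w x w^-1 = w.x,  w xi w^-1 = w.xi *)
  (HWx : forall g j, inW m1 m2 g -> piW g * x j = lin x (cvC (g *m ev R j)) * piW g)
  (HWxi : forall g j, inW m1 m2 g ->
      piW g * xi j = linr xi ((cvC (ev R j))^T *m invmx (map_mx (@toC R) g)) * piW g)
  (* Cherednik relations *)
  (Hxx : forall j k, x j * x k = x k * x j)
  (Hxixi : forall j k, xi j * xi k = xi k * xi j)
  (Hxix : forall j k, xi j * x k - x k * xi j =
      (j == k)%:R +
      \sum_(a <- posroots R m1 m2)
         (toC (2 / ip a a) * kappa a * toC (ip (ev R j) a) * toC (ip (ev R k) a)) *: piW (refl a))
  (* Clifford relations *)
  (He : forall j k, e j * e k + e k * e j = (2 * (j == k)%:R) *: 1)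
  (* the two tensor factors commute *)
  (Hex : forall j k, e j * x k = x k * e j)
  (Hexi : forall j k, e j * xi k = xi k * e j)
  (HepiW : forall j g, inW m1 m2 g -> e j * piW g = piW g * e j) :
  let Dirac := \sum_(j < 4) xi j * e j in
  let xs := \sum_(j < 4) x j * e j in
  let O := fun k (v : 'I_k -> 'cV[R[i]]_4) => Oop e Dirac xs v in
  let H1 := (1 / 2 : R[i]) *: O 2%N (zpair R 1) in
  let H2 := (1 / 2 : R[i]) *: O 2%N (zpair R 2) in
  let Z := O 4%N (x1234 R) in
  let st := fun a : 'cV[R]_4 => piW (refl a) * gam1 e (cvC a) in
  let r1 := - (st (alpha R m1 m1) * st (alpha R m1 1)) in
  let r2 := - (st (beta R m2 m2) * st (beta R m2 1)) in
  let t0 := [:: H1; H2; Z; r1; r2] in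
  forall a b, a \in t0 -> b \in t0 -> a * b = b * a.
Proof.
by apply: final_sec.
Qed.
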